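(* Consider standard (linear-kernel) $k$-means on $\mathbb{R}$. For every $m\in\mathbb{N}$ there exist $k\in\mathbb{N}$ and a finite dataset $X\subset\mathbb{R}$ such that: the price of explainability of $X$ is $p(X)=1$; the tree produced by IMM (with reference clustering an optimal $k$-means clustering of $X$) attains $p(T_{IMM},X)=1$; but ExKMC initialized on the empty tree and run until the tree has $k$ leaves constructs a decision tree $T$ with $p(T,X)\ge m$.
   Context: $k$-means cost of a partition $C_1,\dots,C_k$ of $X$: $\sum_l\sum_{x\in C_l}\|x-c_l\|^2$ with $c_l$ the mean of $C_l$; $\mathrm{cost}_{opt}(X)$ is its minimum. The reference clustering is an optimal $k$-means partition with centers $c_1,\dots,c_k$ (its means); for $x\in X$, $c(x)$ is the center of its cluster. For a decision tree $T$ whose $k$ leaves partition $X$, $\mathrm{cost}(T,X)$ is the $k$-means cost of the leaf partition and $p(T,X)=\mathrm{cost}(T,X)/\mathrm{cost}_{opt}(X)$; $p(X)=\min_T p(T,X)$ over interpretable decision trees with $k$ leaves, i.e. trees where each internal node splits its data $X^u$ into $\{x\in X^u:x_i\in[\theta_1,\theta_2]\}$ and its complement for some coordinate $i$ and reals $\theta_1<\theta_2$. IMM: build a tree top-down; each node $u$ holds points $X^u$ and centers $\mathcal{M}^u$ (root: all). If $|\mathcal{M}^u|=1$, $u$ is a leaf; otherwise choose, among threshold cuts $x_i\le\theta$ splitting $\mathcal{M}^u$ into two nonempty parts, one minimizing the number of mistakes (points $x\in X^u$ with $c(x)\in\mathcal{M}^u$ lying on the opposite side of the cut from $c(x)$),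 and pass points and centers to the children accordingly. ExKMC: start with one leaf containing $X$. While the number of leaves is less than $k$: for each leaf $u$ (data $X^u$) and each cut $(i,\theta)$ with $X^u_L=\{x\in X^u:x_i\le\theta\}$, $X^u_R=\{x\in X^u:x_i>\theta\}$, let $\mathrm{cost}_{exkmc}(u,i,\theta)=\min_{j,l\in[k]}\big(\sum_{x\in X^u_L}\|x-c_j\|^2+\sum_{x\in X^u_R}\|x-c_l\|^2\big)$; choose the leaf and cut maximizing $\min_{j\in[k]}\sum_{x\in X^u}\|x-c_j\|^2-\mathrm{cost}_{exkmc}(u,i,\theta)$, and replace that leaf by its two children $X^u_L,X^u_R$. *)

(* Defs.v *)
From HB Require Import structures.
From mathcomp Require Import all_boot all_order all_algebra.
From mathcomp Require Import reals.
Set Implicit Arguments. Unset Strict Implicit. Unset Printing Implicit Defensive.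
Import Order.TTheory GRing.Theory Num.Theory.
Local Open Scope ring_scope.

Section KMeans1D.
Variable R : realType.

Definition mean (s : seq R) : R := (\sum_(x <- s) x) / (size s)%:R.
Definition cluster_cost (s : seq R) : R := \sum_(x <- s) (x - mean s) ^+ 2.
Definition part_cost (P : seq (seq R)) : R := \sum_(C <- P) cluster_cost C.

Definition clusters (k : nat) (X : seq R) (lab : R -> 'I_k) : seq (seq R) :=
  [seq [seq x <- X | lab x == i] | i <- enum 'I_k].
Definition nonempty_clusters (k : nat) (X : seq R) (lab : R -> 'I_k) : Prop :=
  forall i : 'I_k, has (fun x => lab x == i) X.
Definition kmeans_cost (k : nat) (X : seq R) (lab : R -> 'I_k) : R :=
  part_cost (clusters X lab).

Definition is_cost_opt (k : nat) (X : seq R) (c : R) : Prop :=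
  (exists lab : R -> 'I_k, nonempty_clusters X lab /\ kmeans_cost X lab = c) /\
  (forall lab : R -> 'I_k, nonempty_clusters X lab -> c <= kmeans_cost X lab).

Definition is_opt_clustering (k : nat) (X : seq R) (lab : R -> 'I_k) : Prop :=
  nonempty_clusters X lab /\
  (forall lab' : R -> 'I_k, nonempty_clusters X lab' ->
     kmeans_cost X lab <= kmeans_cost X lab').

Definition centers (k : nat) (X : seq R) (lab : R -> 'I_k) (i : 'I_k) : R :=
  mean [seq x <- X | lab x == i].

(** Interpretable decision trees on R: an internal node splits its data into
    {x | a <= x <= b} (first child) and its complement (second child), a < b. *)
Inductive itree : Type :=
| Leaf : itree
| Node : R -> R -> itree -> itree -> itree.

Fixpoint itree_wf (T : itree) : Prop :=
  match T with
  | Leaf => True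
  | Node a b T1 T2 => a < b /\ itree_wf T1 /\ itree_wf T2
  end.

Fixpoint nleaves (T : itree) : nat :=
  match T with
  | Leaf => 1
  | Node _ _ T1 T2 => nleaves T1 + nleaves T2
  end.

Fixpoint leaf_part (T : itree) (X : seq R) : seq (seq R) :=
  match T with
  | Leaf => [:: X]
  | Node a b T1 T2 =>
      leaf_part T1 [seq x <- X | a <= x <= b] ++
      leaf_part T2 [seq x <- X | ~~ (a <= x <= b)]
  end.

Definition tree_cost (T : itree) (X : seq R) : R := part_cost (leaf_part T X).

Definition price_tree (copt : R) (T : itree) (X : seq R) : R := tree_cost T X / copt.

Definition price_is (k : nat) (X : seq R) (copt v : R) : Prop :=
  (exists T, itree_wf T /\ nleaves T = k /\ price_tree copt T X = v) /\
  (forall T, itree_wf T -> nleaves T = k -> v <= price_tree copt T X).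

Section IMM.
Variables (k : nat) (c : 'I_k -> R) (lab : R -> 'I_k).

Definition imm_valid (Mu : seq 'I_k) (th : R) : bool :=
  has (fun i => c i <= th) Mu && has (fun i => ~~ (c i <= th)) Mu.

Definition imm_mistakes (Xu : seq R) (Mu : seq 'I_k) (th : R) : nat :=
  count (fun x => (lab x \in Mu) && ((x <= th) != (c (lab x) <= th))) Xu.

(** imm_run Xu Mu P : some execution of IMM from a node holding points Xu and
    centers Mu produces a subtree whose leaves partition Xu as P. *)
Inductive imm_run : seq R -> seq 'I_k -> seq (seq R) -> Prop :=
| imm_leaf Xu Mu : size Mu = 1%N -> imm_run Xu Mu [:: Xu]
| imm_node Xu Mu th PL PR :
    (1 < size Mu)%N ->
    imm_valid Mu th ->
    (forall th', imm_valid Mu th' ->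
       (imm_mistakes Xu Mu th <= imm_mistakes Xu Mu th')%N) ->
    imm_run [seq x <- Xu | x <= th] [seq i <- Mu | c i <= th] PL ->
    imm_run [seq x <- Xu | ~~ (x <= th)] [seq i <- Mu | ~~ (c i <= th)] PR ->
    imm_run Xu Mu (PL ++ PR).
End IMM.

Section ExKMC.
Variables (k : nat) (c : 'I_k -> R).

Definition seqmin (s : seq R) : R := foldr Order.min (head 0 s) s.

Definition sqdist_sum (s : seq R) (a : R) : R := \sum_(x <- s) (x - a) ^+ 2.

Definition cost_exkmc (Xu : seq R) (th : R) : R :=
  seqmin [seq sqdist_sum [seq x <- Xu | x <= th] (c j) +
              sqdist_sum [seq x <- Xu | ~~ (x <= th)] (c l)
         | j <- enum 'I_k, l <- enum 'I_k].

Definition exkmc_gain (Xu : seq R) (th : R) : R :=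
  seqmin [seq sqdist_sum Xu (c j) | j <- enum 'I_k] - cost_exkmc Xu th.

(** exkmc_run L F : starting from leaves L (list of data sets), some execution
    of ExKMC (splitting until there are k leaves) ends with leaves F. *)
Inductive exkmc_run : seq (seq R) -> seq (seq R) -> Prop :=
| exkmc_stop L : ~ (size L < k)%N -> exkmc_run L L
| exkmc_step L u th F :
    (size L < k)%N ->
    (u < size L)%N ->
    (forall u' th', (u' < size L)%N ->
       exkmc_gain (nth [::] L u') th' <= exkmc_gain (nth [::] L u) th) ->
    exkmc_run (take u L ++
               [:: [seq x <- nth [::] L u | x <= th];
                   [seq x <- nth [::] L u | ~~ (x <= th)]] ++ drop u.+1 L) F ->
    exkmc_run L F.
End ExKMC.

End KMeans1D.

(* Main.v *)
Require Import Defs.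
From HB Require Import structures.
From mathcomp Require Import all_boot all_order all_algebra.
From mathcomp Require Import reals.
From mathcomp Require Import lra zify.
Import Order.TTheory GRing.Theory Num.Theory.
Local Open Scope ring_scope.
Set Implicit Arguments. Unset Strict Implicit. Unset Printing Implicit Defensive.
Lemma cc_ge0 (R : realType) (s : seq R) : 0 <= cluster_cost s.
Proof. by apply: sumr_ge0 => x _; apply: sqr_ge0. Qed.

Lemma part_ge (R : realType) (P : seq (seq R)) C :
  C \in P -> cluster_cost C <= part_cost P.
Proof.
move=> HC; rewrite /part_cost (big_rem C HC) /= lerDl.
by apply: sumr_ge0 => x _; apply: cc_ge0.
Qed.

Lemma sq_pair (R : realType) (s : seq R) (a x y : R) :
  x \in s -> y \in s -> x != y ->
  (x - y) ^+ 2 / 2 <= \sum_(z <- s) (z - a) ^+ 2.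
Proof.
move=> Hx Hy Hxy; rewrite (big_rem x Hx) /=.
have Hy' : y \in rem x s by apply: rem_mem => //; rewrite eq_sym.
rewrite (big_rem y Hy') /=.
have H0 : 0 <= \sum_(z <- rem y (rem x s)) (z - a) ^+ 2.
  by apply: sumr_ge0 => z _; apply: sqr_ge0.
have := sqr_ge0 (x + y - 2 * a); nra.
Qed.

Lemma cc_pair (R : realType) (s : seq R) (x y : R) :
  x \in s -> y \in s -> x != y -> (x - y) ^+ 2 / 2 <= cluster_cost s.
Proof. exact: sq_pair. Qed.

Lemma flatten_size_le (T : Type) (P : seq (seq T)) :
  all (fun C => size C <= 1)%N P -> (size (flatten P) <= size P)%N.
Proof.
elim: P => //= C P IH /andP[H1 H2]; rewrite size_cat.
have := IH H2; lia.
Qed.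

Lemma uniq_flatten_in (T : eqType) (P : seq (seq T)) C :
  uniq (flatten P) -> C \in P -> uniq C.
Proof.
elim: P => //= D P IH; rewrite cat_uniq => /and3P[HD _ HP].
by rewrite inE => /predU1P[->//|]; apply: IH.
Qed.

Lemma pigeon_part (T : eqType) (X : seq T) (P : seq (seq T)) :
  uniq X -> perm_eq (flatten P) X -> (size P < size X)%N ->
  exists C, C \in P /\ exists x y, [/\ x \in C, y \in C & x != y].
Proof.
move=> uX pP sP.
have : has (fun C => 1 < size C)%N P.
  apply: negbNE; apply/negP => /hasPn H.
  have : all (fun C => size C <= 1)%N P.
    by apply/allP => C /H; rewrite -leqNgt.
  move/flatten_size_le; rewrite (perm_size pP); lia.
case/hasP => C HC; case: C HC => [|x [|y C]] //= HC _.
have : uniq [:: x, y & C] by apply: (uniq_flatten_in _ HC); rewrite (perm_uniq pP).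
case/andP; rewrite inE negb_or => /andP[Hxy _] _.
exists [:: x, y & C]; split=> //; exists x, y; split=> //.
- by rewrite inE eqxx.
- by rewrite !inE eqxx orbT.
Qed.

Lemma perm_leaf (R : realType) (T : itree R) (Y : seq R) :
  perm_eq (flatten (leaf_part T Y)) Y /\ size (leaf_part T Y) = nleaves T.
Proof.
elim: T Y => [|a b T1 IH1 T2 IH2] Y /=; first by rewrite cats0.
have [p1 s1] := IH1 [seq x <- Y | a <= x <= b].
have [p2 s2] := IH2 [seq x <- Y | ~~ (a <= x <= b)].
split; last by rewrite size_cat s1 s2.
rewrite flatten_cat.
apply: perm_trans (perm_cat p1 p2) _.
by rewrite perm_filterC.
Qed.
Lemma foldr_min_le (R : realType) (d : R) (s : seq R) x :
  x \in s -> foldr Order.min d s <= x.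
Proof.
elim: s => //= y s IH; rewrite inE => /predU1P[->|/IH H].
- by rewrite ge_min lexx.
- by rewrite ge_min H orbT.
Qed.

Lemma foldr_min_mem (R : realType) (d : R) (s : seq R) :
  foldr Order.min d s \in d :: s.
Proof.
elim: s => /= [|y s IH]; first by rewrite inE eqxx.
rewrite minEle; case: ifP => _; first by rewrite !inE eqxx orbT.
move: IH; rewrite !inE => /orP[->//|->]; by rewrite !orbT.
Qed.

Lemma seqmin_le (R : realType) (s : seq R) x : x \in s -> seqmin s <= x.
Proof. exact: foldr_min_le. Qed.

Lemma seqmin_mem (R : realType) (s : seq R) : s != [::] -> seqmin s \in s.
Proof.
case: s => //= y s _; have := foldr_min_mem y (y :: s).
by rewrite /seqmin /= inE => /predU1P[->|//]; rewrite inE eqxx.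
Qed.

Lemma argmax (R : realType) (T : eqType) (s : seq T) (f : T -> R) :
  s != [::] -> exists2 e, e \in s & forall e', e' \in s -> f e' <= f e.
Proof.
elim: s => //= a s IH _.
case: (altP (s =P [::])) => [->|/IH [e He Hm]].
  by exists a; rewrite ?inE ?eqxx // => e'; rewrite inE => /eqP->.
case: (leP (f e) (f a)) => H.
- exists a; first by rewrite inE eqxx.
  move=> e'; rewrite inE => /predU1P[->//|/Hm]; move=> H'; exact: le_trans H' H.
- exists e; first by rewrite inE He orbT.
  move=> e'; rewrite inE => /predU1P[->|/Hm//]; exact: ltW.
Qed.

Definition cand (R : realType) (Xu : seq R) : seq R := (seqmin Xu - 1) :: Xu.

Lemma cand_ok (R : realType) k (c : 'I_k -> R) (Xu : seq R) th :
  exists2 t, t \in cand Xu & exkmc_gain c Xu th = exkmc_gain c Xu t.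
Proof.
have key : forall t, {in Xu, forall x, (x <= th) = (x <= t)} ->
    exkmc_gain c Xu th = exkmc_gain c Xu t.
  move=> t Ht.
  have E1 : [seq x <- Xu | x <= th] = [seq x <- Xu | x <= t].
    by apply: eq_in_filter => x /Ht.
  have E2 : [seq x <- Xu | ~~ (x <= th)] = [seq x <- Xu | ~~ (x <= t)].
    by apply: eq_in_filter => x /Ht ->.
  by rewrite /exkmc_gain /cost_exkmc E1 E2.
case: (boolP (has (fun x => x <= th) Xu)) => Hh.
- have : [seq x <- Xu | x <= th] != [::].
    by rewrite -has_filter.
  case/(argmax id) => t; rewrite mem_filter => /andP[Htth HtX] Hm.
  exists t; first by rewrite inE HtX orbT.
  apply: key => x Hx; apply/idP/idP => H.
  + by apply: Hm; rewrite mem_filter H Hx.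
  + exact: le_trans H Htth.
- exists (seqmin Xu - 1); first by rewrite inE eqxx.
  apply: key => x Hx; move/hasPn: Hh => /(_ x Hx) /negbTE ->.
  have := seqmin_le Hx => Hs; symmetry; apply/negbTE; lra.
Qed.

Lemma exkmc_max (R : realType) k (c : 'I_k -> R) (L : seq (seq R)) :
  (0 < size L)%N -> exists u th, (u < size L)%N /\
    (forall u' th', (u' < size L)%N ->
       exkmc_gain c (nth [::] L u') th' <= exkmc_gain c (nth [::] L u) th).
Proof.
move=> HL.
pose cs := [seq (u, t) | u <- iota 0 (size L), t <- cand (nth [::] L u)].
have : cs != [::].
  have : (0%N, seqmin (nth [::] L 0) - 1) \in cs.
    apply/allpairsPdep; exists 0%N, (seqmin (nth [::] L 0) - 1).
    by rewrite mem_iota inE eqxx /=; split => //; lia.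
  by case: (cs).
case/(argmax (fun p => exkmc_gain c (nth [::] L p.1) p.2)) => [[u t]] Hin Hm.
have /allpairsPdep [u0 [t0 [Hu0 Ht0 [E1 E2]]]] := Hin.
subst u0 t0.
exists u, t; split; first by move: Hu0; rewrite mem_iota.
move=> u' th' Hu'.
have [t' Ht' ->] := cand_ok c (nth [::] L u') th'.
apply: (Hm (u', t')).
apply/allpairsPdep; exists u', t'; split => //; rewrite mem_iota; lia.
Qed.

Lemma exkmc_exists (R : realType) k (c : 'I_k -> R) n (L : seq (seq R)) :
  (k - size L <= n)%N -> (0 < size L)%N -> exists F, exkmc_run c L F.
Proof.
elim: n L => [|n IH] L Hn HL.
  by exists L; apply: exkmc_stop; lia.
case: (ltnP (size L) k) => Hk; last by exists L; apply: exkmc_stop; lia.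
have [u [th [Hu Hm]]] := exkmc_max c HL.
pose L' := take u L ++ [:: [seq x <- nth [::] L u | x <= th];
                   [seq x <- nth [::] L u | ~~ (x <= th)]] ++ drop u.+1 L.
have sL' : size L' = (size L).+1.
  rewrite /L' !size_cat /= size_take size_drop Hu; lia.
have [F HF] := IH L' (ltac:(lia)) (ltac:(lia)).
exists F; exact: (exkmc_step Hk Hu Hm HF).
Qed.
Definition pts (R : realType) (N : R) : seq R := [:: -(2*N); -N; -1; 1; N; 2*N].
Definition mid (R : realType) (x : R) : bool := (x == -1) || (x == 1).
Definition cv (R : realType) (x : R) : R := if mid x then 0 else x.

Lemma memX (R : realType) (N x : R) : x \in pts N ->
  x = -(2*N) \/ x = -N \/ x = -1 \/ x = 1 \/ x = N \/ x = 2*N.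
Proof.
rewrite !inE => /orP[/eqP->|/orP[/eqP->|/orP[/eqP->|/orP[/eqP->|/orP[/eqP->|/eqP->]]]]];
tauto.
Qed.

Ltac casesX H := case/memX: H => [->|[->|[->|[->|[->|->]]]]].

Lemma uniqX (R : realType) (N : R) : 4 <= N -> uniq (pts N).
Proof. move=> HN; rewrite /= !inE; lra. Qed.

Lemma gap (R : realType) (N x y : R) : 4 <= N -> x \in pts N -> y \in pts N -> x != y ->
  4 <= (x - y) ^+ 2 /\ (~~ (mid x && mid y) -> (N - 1) ^+ 2 <= (x - y) ^+ 2).
Proof.
move=> HN Hx Hy; casesX Hx; casesX Hy; rewrite /mid => Hxy;
  try (by move: Hxy; rewrite eqxx); split; try move=> Hm; nra.
Qed.
Ltac dec := repeat match goal with |- context [if ?b then _ else _] =>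
  first [have -> : b = true by lra | have -> : b = false by lra] end.

Lemma kcost_sum (R : realType) k (X : seq R) (lab : R -> 'I_k) :
  kmeans_cost X lab = \sum_(x <- X) (x - centers X lab (lab x)) ^+ 2.
Proof.
rewrite /kmeans_cost /part_cost /clusters big_map.
transitivity (\sum_(i <- enum 'I_k) \sum_(x <- X)
    (if lab x == i then (x - centers X lab (lab x)) ^+ 2 else 0)).
  apply: eq_bigr => i _; rewrite /cluster_cost big_filter big_mkcond.
  by apply: eq_bigr => x _; case: eqP => // <-.
rewrite exchange_big; apply: eq_bigr => x _.
rewrite -big_mkcond big_enum_cond /=.
rewrite (big_pred1 (lab x)) // => i /=; by rewrite eq_sym.
Qed.

Definition good (R : realType) (N : R) (lab : R -> 'I_5) :=
  lab (-1) = lab 1 /\ forall x y, x \in pts N -> y \in pts N -> lab x = lab y ->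
    x = y \/ (mid x && mid y).

Lemma mean2 (R : realType) : mean [:: -1; 1 : R] = 0.
Proof. by rewrite /mean !big_cons big_nil /= addrA addNr add0r mul0r. Qed.
Lemma mean1 (R : realType) (x : R) : mean [:: x] = x.
Proof. by rewrite /mean big_cons big_nil /= addr0 divr1. Qed.

Lemma cent_good (R : realType) (N : R) (lab : R -> 'I_5) x : 4 <= N ->
  good N lab -> x \in pts N -> centers (pts N) lab (lab x) = cv x.
Proof.
move=> HN [H1 H2] Hx; rewrite /centers /cv.
case: (boolP (mid x)) => Hm.
- have -> : [seq z <- pts N | lab z == lab x] = [seq z <- pts N | mid z].
    apply: eq_in_filter => z Hz; apply/eqP/idP => [E|Mz].
    + by case: (H2 _ _ Hz Hx E) => [->//|/andP[]].
    + move: Mz Hm; rewrite /mid => /orP[] /eqP -> /orP[] /eqP ->; by rewrite ?H1.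
  rewrite /= /mid; dec; exact: mean2.
- have -> : [seq z <- pts N | lab z == lab x] = [seq z <- pts N | z == x].
    apply: eq_in_filter => z Hz; apply/eqP/eqP => [E|->//].
    by case: (H2 _ _ Hz Hx E) => [//|/andP[_ Hmx]]; rewrite Hmx in Hm.
  by rewrite filter_pred1_uniq ?uniqX // mean1.
Qed.

Lemma kcost_good (R : realType) (N : R) (lab : R -> 'I_5) : 4 <= N ->
  good N lab -> kmeans_cost (pts N) lab = 2.
Proof.
move=> HN Hg; rewrite kcost_sum.
have C := fun x => @cent_good R N lab x HN Hg.
rewrite {2}/pts !big_cons big_nil !C ?inE ?eqxx ?orbT //.
rewrite /cv /mid; dec; lra.
Qed.

Definition lab0 (R : realType) (N : R) (x : R) : 'I_5 :=
  if x == -(2*N) then @Ordinal 5 0 isT else if x == -N then @Ordinal 5 1 isT else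
  if mid x then @Ordinal 5 2 isT else if x == N then @Ordinal 5 3 isT
  else @Ordinal 5 4 isT.

Lemma lab0_good (R : realType) (N : R) : 4 <= N -> good N (lab0 N).
Proof.
move=> HN; split; first by rewrite /lab0 /mid; dec.
move=> x y Hx Hy; casesX Hx; casesX Hy; rewrite /lab0 /mid; dec;
  move=> E; try (by left); try (by right);
  by move/(congr1 val): E.
Qed.
Lemma lab0_ne (R : realType) (N : R) : 4 <= N -> nonempty_clusters (pts N) (lab0 N).
Proof.
move=> HN [[|[|[|[|[|i]]]]] Hi] //; apply/hasP.
- by exists (-(2*N)); rewrite ?inE ?eqxx //= /lab0 /mid; dec.
- by exists (-N); rewrite ?inE ?eqxx ?orbT //= /lab0 /mid; dec.
- by exists (-1); rewrite ?inE ?eqxx ?orbT //= /lab0 /mid; dec.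
- by exists N; rewrite ?inE ?eqxx ?orbT //= /lab0 /mid; dec.
- by exists (2*N); rewrite ?inE ?eqxx ?orbT //= /lab0 /mid; dec.
Qed.

Lemma pair_cost (R : realType) k (X : seq R) (lab : R -> 'I_k) x y :
  x \in X -> y \in X -> x != y -> lab x = lab y ->
  (x - y) ^+ 2 / 2 <= kmeans_cost X lab.
Proof.
move=> Hx Hy Hxy E.
apply: le_trans (part_ge _).
  apply: (cc_pair (s := [seq z <- X | lab z == lab x])) Hxy.
  - by rewrite mem_filter eqxx Hx.
  - by rewrite mem_filter E eqxx Hy.
by apply: map_f; rewrite mem_enum.
Qed.

Lemma pigeon_lab (R : realType) (N : R) (lab : R -> 'I_5) : 4 <= N ->
  exists x y, [/\ x \in pts N, y \in pts N, x != y & lab x = lab y].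
Proof.
move=> HN.
have : has (fun x => has (fun y => (x != y) && (lab x == lab y)) (pts N)) (pts N).
  apply: negbNE; apply/negP => /hasPn H.
  have U : uniq (map lab (pts N)).
    rewrite map_inj_in_uniq ?uniqX // => x y Hx Hy E.
    have := H x Hx; move/hasPn/(_ y Hy); rewrite E eqxx andbT negbK.
    by move/eqP.
  have := uniq_leq_size U (s2 := enum 'I_5).
  by rewrite size_map size_enum_ord /= => /(_ (fun i _ => mem_enum _ i)).
case/hasP => x Hx /hasP [y Hy /andP[Hxy /eqP E]].
by exists x, y.
Qed.

Lemma kcost_lb (R : realType) (N : R) (lab : R -> 'I_5) : 4 <= N ->
  2 <= kmeans_cost (pts N) lab.
Proof.
move=> HN; have [x [y [Hx Hy Hxy E]]] := pigeon_lab lab HN.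
have [G _] := gap HN Hx Hy Hxy.
have := pair_cost Hx Hy Hxy E; lra.
Qed.

Lemma opt_good (R : realType) (N : R) (lab : R -> 'I_5) : 4 <= N ->
  is_opt_clustering (pts N) lab -> good N lab.
Proof.
move=> HN [Hne Hopt].
have Hc : kmeans_cost (pts N) lab <= 2.
  by rewrite -(kcost_good HN (lab0_good HN)); apply: Hopt; apply: lab0_ne.
have S2 : forall x y, x \in pts N -> y \in pts N -> lab x = lab y ->
    x = y \/ (mid x && mid y).
  move=> x y Hx Hy E; case: (eqVneq x y) => [->|Hxy]; first by left.
  case: (boolP (mid x && mid y)) => Hm; first by right.
  have [_ G] := gap HN Hx Hy Hxy.
  have := G Hm; have := pair_cost Hx Hy Hxy E; nra.
split=> //.
have [x [y [Hx Hy Hxy E]]] := pigeon_lab lab HN.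
case: (S2 x y Hx Hy E) => [Exy|]; first by rewrite Exy eqxx in Hxy.
move: Hxy E; rewrite /mid => Hxy E /andP[/orP[] /eqP Ex /orP[] /eqP Ey];
  subst x y => //; by rewrite eqxx in Hxy.
Qed.
Lemma cc1 (R : realType) (x : R) : cluster_cost [:: x] = 0.
Proof. by rewrite /cluster_cost mean1 big_cons big_nil subrr expr0n /= addr0. Qed.
Lemma cc2 (R : realType) : cluster_cost [:: -1; 1 : R] = 2.
Proof. rewrite /cluster_cost mean2 !big_cons big_nil !subr0; lra. Qed.

Definition T0 (R : realType) (N : R) : itree R :=
  Node (-(3*N)) (-(3*N)/2) (Leaf R) (Node (-(3*N)/2) (-N/2) (Leaf R)
    (Node (-N/2) (N/2) (Leaf R) (Node (N/2) (3*N/2) (Leaf R) (Leaf R)))).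

Lemma price_ok (R : realType) (N : R) : 4 <= N -> price_is 5 (pts N) 2 1.
Proof.
move=> HN; split.
  exists (T0 N); split; first by rewrite /=; lra.
  split => //.
  rewrite /price_tree /tree_cost /=; do 4 (dec; rewrite /=).
  rewrite /part_cost /= !big_cons big_nil !cc1 cc2; lra.
move=> T _ HT; rewrite /price_tree.
have [pP sP] := perm_leaf T (pts N).
have [C [HC [x [y [Hx Hy Hxy]]]]] := pigeon_part (uniqX HN) pP (ltac:(by rewrite sP HT)).
have HxX : x \in pts N by rewrite -(perm_mem pP); apply/flattenP; exists C.
have HyX : y \in pts N by rewrite -(perm_mem pP); apply/flattenP; exists C.
have [G _] := gap HN HxX HyX Hxy.
have := cc_pair Hx Hy Hxy; have := part_ge HC.
rewrite /tree_cost; lra.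
Qed.
Lemma Cs (R : realType) (N : R) (lab : R -> 'I_5) :
  nonempty_clusters (pts N) lab -> forall i, exists2 x, x \in pts N & lab x = i.
Proof. by move=> Hne i; case/hasP: (Hne i) => x Hx /eqP E; exists x. Qed.

Lemma Ci (R : realType) (N : R) (lab : R -> 'I_5) : 4 <= N -> good N lab ->
  nonempty_clusters (pts N) lab ->
  forall i j, centers (pts N) lab i = centers (pts N) lab j -> i = j.
Proof.
move=> HN Hg Hne i j.
have [x Hx <-] := Cs Hne i; have [y Hy <-] := Cs Hne j.
rewrite !(cent_good HN Hg) //.
have [H1 _] := Hg.
casesX Hx; casesX Hy; rewrite /cv /mid; dec; move=> E;
  first [done | (exfalso; lra) | by rewrite H1 | by rewrite -H1].
Qed.

Definition th0 (R : realType) (v : R) : R := if v == 0 then 1 else v.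

Lemma zc (R : realType) (N a x : R) : 4 <= N -> a \in pts N -> x \in pts N ->
  (x <= th0 (cv a)) = (cv x <= th0 (cv a)).
Proof.
move=> HN Ha Hx; casesX Ha; casesX Hx; rewrite /th0 /cv /mid; dec;
  apply/idP/idP => ?; lra.
Qed.

Lemma zvalid (R : realType) (N a b : R) : 4 <= N -> a \in pts N -> b \in pts N ->
  cv a < cv b -> cv a <= th0 (cv a) < cv b.
Proof.
move=> HN Ha Hb; casesX Ha; casesX Hb; rewrite /th0 /cv /mid; dec; lra.
Qed.

Lemma imm_zero (R : realType) (N : R) (lab : R -> 'I_5) : 4 <= N -> good N lab ->
  nonempty_clusters (pts N) lab ->
  forall Xu Mu, {subset Xu <= pts N} -> uniq Mu -> (1 < size Mu)%N ->
  exists th, imm_valid (centers (pts N) lab) Mu th /\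
             imm_mistakes (centers (pts N) lab) lab Xu Mu th = 0%N.
Proof.
move=> HN Hg Hne Xu Mu HXu HU Hs.
set c := centers (pts N) lab.
have [a [b [Ha Hb Hab]]] : exists a b, [/\ a \in Mu, b \in Mu & c a < c b].
  case: Mu HU Hs => [|i [|j Mu]] //= /andP[]; rewrite inE negb_or => /andP[Hij _] _ _.
  have Hc : c i != c j by apply/eqP => /(Ci HN Hg Hne) E; rewrite E eqxx in Hij.
  case: (ltgtP (c i) (c j)) => H.
  - by exists i, j; rewrite !inE !eqxx ?orbT.
  - by exists j, i; rewrite !inE !eqxx ?orbT.
  - by rewrite H eqxx in Hc.
have [xa Hxa Ea] := Cs Hne a; have [xb Hxb Eb] := Cs Hne b.
have Cv := fun x => @cent_good R N lab x HN Hg.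
move: Hab; rewrite /c -Ea -Eb !Cv // => Hab.
exists (th0 (cv xa)); split.
  have /andP[V1 V2] := zvalid HN Hxa Hxb Hab.
  apply/andP; split; apply/hasP.
  - by exists a => //; rewrite /c -Ea Cv.
  - by exists b => //; rewrite /c -Eb Cv // -ltNge.
apply/eqP; rewrite -leqn0 leqNgt -has_count; apply/hasPn => x Hx.
by rewrite /c Cv ?HXu // (zc HN Hxa (HXu _ Hx)) eqxx andbF.
Qed.
Lemma imm_inv (R : realType) (N : R) (lab : R -> 'I_5) : 4 <= N -> good N lab ->
  nonempty_clusters (pts N) lab ->
  forall Xu Mu P, imm_run (centers (pts N) lab) lab Xu Mu P ->
  Xu = [seq x <- pts N | lab x \in Mu] -> uniq Mu ->
  part_cost P = \sum_(i <- Mu) cluster_cost [seq x <- pts N | lab x == i].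
Proof.
move=> HN Hg Hne Xu Mu P HP.
elim: HP => {Xu Mu P} [Xu Mu Hs | Xu Mu th PL PR Hs Hv Hm HL IHL HR IHR] HX HU.
  case: Mu Hs HX HU => [|i [|]] // _ -> _.
  rewrite /part_cost !big_seq1; apply: f_equal.
  by apply: eq_filter => x; rewrite inE.
set c := centers (pts N) lab in Hv Hm HL HR IHL IHR *.
have HXu : {subset Xu <= pts N} by move=> x; rewrite HX mem_filter => /andP[].
have [th' [Hv' H0]] := imm_zero HN Hg Hne HXu HU Hs.
have Hz : imm_mistakes c lab Xu Mu th = 0%N.
  by have := Hm th' Hv'; rewrite H0 leqn0 => /eqP.
have NM : forall x, x \in pts N -> lab x \in Mu -> (x <= th) = (c (lab x) <= th).
  move=> x Hx HM.
  have Hxu : x \in Xu by rewrite HX mem_filter HM Hx.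
  move/eqP: Hz; rewrite -leqn0 leqNgt -has_count => /hasPn /(_ x Hxu).
  by rewrite HM /= negbK => /eqP.
rewrite /part_cost big_cat -/(part_cost PL) -/(part_cost PR).
rewrite IHL ?IHR ?filter_uniq //.
- by rewrite [RHS](bigID (fun i => c i <= th)) !big_filter.
- move: (HX) => ->; rewrite -filter_predI; apply: eq_in_filter => x Hx /=.
  rewrite mem_filter; case: (boolP (lab x \in Mu)) => HM; last by rewrite !andbF.
  by rewrite !andbT (NM x Hx HM).
- move: (HX) => ->; rewrite -filter_predI; apply: eq_in_filter => x Hx /=.
  rewrite mem_filter; case: (boolP (lab x \in Mu)) => HM; last by rewrite !andbF.
  by rewrite !andbT (NM x Hx HM).
Qed.

Lemma imm_ex (R : realType) (N : R) (lab : R -> 'I_5) : 4 <= N -> good N lab ->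
  nonempty_clusters (pts N) lab -> forall n Xu Mu,
  (size Mu <= n)%N -> (0 < size Mu)%N -> uniq Mu -> {subset Xu <= pts N} ->
  exists P, imm_run (centers (pts N) lab) lab Xu Mu P.
Proof.
move=> HN Hg Hne; elim=> [|n IH] Xu Mu Hn H0 HU HXu; first lia.
case: (ltnP 1 (size Mu)) => Hs; last first.
  by exists [:: Xu]; apply: imm_leaf; apply/eqP; rewrite eqn_leq Hs.
have [th [Hv Hz]] := imm_zero HN Hg Hne HXu HU Hs.
set c := centers (pts N) lab in Hv Hz *.
have /andP[V1 V2] := Hv.
have C1 : (count (fun i => (c i <= th)%R) Mu + count (fun i => ~~ (c i <= th)%R) Mu
  = size Mu)%N by apply: count_predC.
move: V1 V2; rewrite !has_count => V1 V2.
have [PL HL] : exists PL, imm_run c lab [seq x <- Xu | x <= th]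
    [seq i <- Mu | c i <= th] PL.
  apply: (IH) => //; rewrite ?size_filter ?filter_uniq //.
  move: Hn C1 V1 V2; set s := size Mu; set a := count _ Mu; set b := count _ Mu; lia.
  by move=> x; rewrite mem_filter => /andP[_ /HXu].
have [PR HR] : exists PR, imm_run c lab [seq x <- Xu | ~~ (x <= th)]
    [seq i <- Mu | ~~ (c i <= th)] PR.
  apply: (IH) => //; rewrite ?size_filter ?filter_uniq //.
  move: Hn C1 V1 V2; set s := size Mu; set a := count _ Mu; set b := count _ Mu; lia.
  by move=> x; rewrite mem_filter => /andP[_ /HXu].
exists (PL ++ PR); apply: imm_node HL HR => //.
by move=> th' _; rewrite Hz.
Qed.
Definition Vb (R : realType) (N : R) : R := 2 * N ^+ 2 + 2 * (N - 1) ^+ 2.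

Ltac keyt := move=> ? ? ?; rewrite {3 4}/pts; do 7 (rewrite /=; dec); rewrite /sqdist_sum /Vb;
  move=> ? ? /memX [->|[->|[->|[->|[->|->]]]]] /memX [->|[->|[->|[->|[->|->]]]]];
  rewrite ?big_cons ?big_nil /cv /mid; dec; nra.

Lemma key1 (R : realType) (N th : R) : 4 <= N -> th < -(2*N) -> th < -(2*N) ->
  forall a b, a \in pts N -> b \in pts N ->
  Vb N < sqdist_sum [seq x <- pts N | x <= th] (cv a) +
         sqdist_sum [seq x <- pts N | ~~ (x <= th)] (cv b).
Proof. keyt. Qed.
Lemma key2 (R : realType) (N th : R) : 4 <= N -> -(2*N) <= th -> th < -N ->
  forall a b, a \in pts N -> b \in pts N ->
  Vb N < sqdist_sum [seq x <- pts N | x <= th] (cv a) +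
         sqdist_sum [seq x <- pts N | ~~ (x <= th)] (cv b).
Proof. keyt. Qed.
Lemma key3 (R : realType) (N th : R) : 4 <= N -> -N <= th -> th < -1 ->
  forall a b, a \in pts N -> b \in pts N ->
  Vb N < sqdist_sum [seq x <- pts N | x <= th] (cv a) +
         sqdist_sum [seq x <- pts N | ~~ (x <= th)] (cv b).
Proof. keyt. Qed.
Lemma key4 (R : realType) (N th : R) : 4 <= N -> 1 <= th -> th < N ->
  forall a b, a \in pts N -> b \in pts N ->
  Vb N < sqdist_sum [seq x <- pts N | x <= th] (cv a) +
         sqdist_sum [seq x <- pts N | ~~ (x <= th)] (cv b).
Proof. keyt. Qed.
Lemma key5 (R : realType) (N th : R) : 4 <= N -> N <= th -> th < 2 * N ->
  forall a b, a \in pts N -> b \in pts N ->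
  Vb N < sqdist_sum [seq x <- pts N | x <= th] (cv a) +
         sqdist_sum [seq x <- pts N | ~~ (x <= th)] (cv b).
Proof. keyt. Qed.
Lemma key6 (R : realType) (N th : R) : 4 <= N -> 2 * N <= th -> 2 * N <= th ->
  forall a b, a \in pts N -> b \in pts N ->
  Vb N < sqdist_sum [seq x <- pts N | x <= th] (cv a) +
         sqdist_sum [seq x <- pts N | ~~ (x <= th)] (cv b).
Proof. keyt. Qed.

Lemma key (R : realType) (N th : R) : 4 <= N -> ~~ (-1 <= th < 1) ->
  forall a b, a \in pts N -> b \in pts N ->
  Vb N < sqdist_sum [seq x <- pts N | x <= th] (cv a) +
         sqdist_sum [seq x <- pts N | ~~ (x <= th)] (cv b).
Proof.
move=> HN Hth.
case: (ltP th (-(2*N))) => h1; first exact: key1.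
case: (ltP th (-N)) => h2; first exact: key2.
case: (ltP th (-1)) => h3; first exact: key3.
case: (ltP th N) => h5.
  have h4 : 1 <= th by move: Hth; rewrite h3 /= -leNgt.
  exact: key4.
case: (ltP th (2*N)) => h6; first exact: key5.
exact: key6.
Qed.
Lemma seqmin_mem' (R : realType) (s : seq R) x : x \in s -> seqmin s \in s.
Proof. by move=> H; apply: seqmin_mem; case: s H. Qed.

Lemma first_step (R : realType) (N : R) (lab : R -> 'I_5) th : 4 <= N ->
  good N lab -> nonempty_clusters (pts N) lab ->
  (forall th', exkmc_gain (centers (pts N) lab) (pts N) th' <=
               exkmc_gain (centers (pts N) lab) (pts N) th) -> -1 <= th < 1.
Proof.
move=> HN Hg Hne Hm.
set c := centers (pts N) lab in Hm *.
have Cv := fun x => @cent_good R N lab x HN Hg.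
have U : cost_exkmc c (pts N) 0 <= Vb N.
  rewrite /cost_exkmc.
  set s := [seq _ | j <- _, l <- _].
  have Hin : sqdist_sum [seq x <- pts N | x <= 0] (c (lab (-N))) +
      sqdist_sum [seq x <- pts N | ~~ (x <= 0)] (c (lab N)) \in s.
    by apply/allpairsP; exists (lab (-N), lab N); rewrite !mem_enum.
  apply: le_trans (seqmin_le Hin) _.
  rewrite /c !Cv ?inE ?eqxx ?orbT // /cv /mid; dec; rewrite /pts; do 7 (rewrite /=; dec).
  rewrite /sqdist_sum !big_cons !big_nil /Vb; nra.
have L : ~~ (-1 <= th < 1) -> Vb N < cost_exkmc c (pts N) th.
  move=> Hth; rewrite /cost_exkmc.
  set s := [seq _ | j <- _, l <- _].
  have Hin : sqdist_sum [seq x <- pts N | x <= th] (c (lab (-N))) +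
      sqdist_sum [seq x <- pts N | ~~ (x <= th)] (c (lab N)) \in s.
    by apply/allpairsP; exists (lab (-N), lab N); rewrite !mem_enum.
  move: (seqmin_mem' Hin) => /allpairsP [[j l] [_ _ ->]] /=.
  have [xj Hxj <-] := Cs Hne j; have [xl Hxl <-] := Cs Hne l.
  rewrite /c !Cv //; exact: key.
have := Hm 0; rewrite /exkmc_gain.
case: (boolP (-1 <= th < 1)) => // /L; lra.
Qed.

Definition sep (R : realType) (C : seq R) : bool := ~~ ((-1 \in C) && (1 \in C)).
Definition Inv (R : realType) (N : R) (L : seq (seq R)) : Prop :=
  perm_eq (flatten L) (pts N) /\ (size L <= 5)%N /\ all (@sep R) L.

Lemma perm_split (T : eqType) (L : seq (seq T)) u l r :
  (u < size L)%N -> perm_eq (l ++ r) (nth [::] L u) ->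
  perm_eq (flatten (take u L ++ [:: l; r] ++ drop u.+1 L)) (flatten L).
Proof.
move=> Hu Hp.
apply: (@perm_trans _ (flatten (take u L ++ nth [::] L u :: drop u.+1 L)));
  last by rewrite -drop_nth // cat_take_drop.
rewrite !flatten_cat perm_cat2l /=.
by rewrite cats0 perm_cat2r.
Qed.

Lemma exkmc_inv (R : realType) (N : R) (c : 'I_5 -> R) L F :
  exkmc_run c L F -> Inv N L -> Inv N F.
Proof.
elim => {L F} [L _ //| L u th F Hs Hu Hm HF IH] [Hp [Hsz Hsep]].
apply: IH; split; [|split].
- apply: perm_trans Hp; apply: perm_split => //.
  by rewrite perm_filterC.
- rewrite !size_cat size_takel ?(ltnW Hu) // size_drop /=; lia.
- apply/allP => C; rewrite !mem_cat => /or3P[HC|HC|HC].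
  + by apply: (allP Hsep); apply: mem_take HC.
  + have Hn := allP Hsep _ (mem_nth [::] Hu).
    move: HC; rewrite !inE => /orP[] /eqP ->; rewrite /sep !mem_filter;
    move: Hn; rewrite /sep; apply: contra => /andP[/andP[_ ->] /andP[_ ->]] //.
  + by apply: (allP Hsep); apply: mem_drop HC.
Qed.

Lemma final_bound (R : realType) (N : R) F : 4 <= N -> Inv N F ->
  (N - 1) ^+ 2 / 2 <= part_cost F.
Proof.
move=> HN [Hp [Hsz Hsep]].
have [C [HC [x [y [Hx Hy Hxy]]]]] :=
  pigeon_part (uniqX HN) Hp (ltac:(rewrite /=; lia)).
have HxX : x \in pts N by rewrite -(perm_mem Hp); apply/flattenP; exists C.
have HyX : y \in pts N by rewrite -(perm_mem Hp); apply/flattenP; exists C.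
have Hs := allP Hsep _ HC.
have Hm : ~~ (mid x && mid y).
  apply/negP => /andP[]; rewrite /mid => /orP[] /eqP Ex /orP[] /eqP Ey;
  subst x y; rewrite ?eqxx // in Hxy;
  by move: Hs; rewrite /sep ?Hx ?Hy.
have [_ G] := gap HN HxX HyX Hxy.
have := G Hm; have := cc_pair Hx Hy Hxy; have := part_ge HC; lra.
Qed.
Theorem theorem6 (R : realType) (m : nat) :
  exists (k : nat) (X : seq R) (copt : R),
    uniq X /\
    is_cost_opt k X copt /\
    price_is k X copt 1 /\
    (forall lab : R -> 'I_k, is_opt_clustering X lab ->
       ((exists P, imm_run (centers X lab) lab X (enum 'I_k) P) /\
        (forall P, imm_run (centers X lab) lab X (enum 'I_k) P ->
           part_cost P / copt = 1)) /\
       ((exists F, exkmc_run (centers X lab) [:: X] F) /\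
        (forall F, exkmc_run (centers X lab) [:: X] F ->
           m%:R <= part_cost F / copt))).
Proof.
set N : R := m%:R + 4.
have Hm0 : 0 <= m%:R :> R by apply: ler0n.
have HN : 4 <= N by rewrite /N; lra.
exists 5%N, (pts N), 2; split; first exact: uniqX.
split.
  split; first by exists (lab0 N); split; [exact: lab0_ne | exact: kcost_good (lab0_good HN)].
  by move=> lab _; apply: kcost_lb.
split; first exact: price_ok.
move=> lab Hopt.
have Hg := opt_good HN Hopt; have Hne := Hopt.1.
split; split.
- apply: (imm_ex HN Hg Hne (n := 5)); rewrite ?size_enum_ord ?enum_uniq //.
- move=> P HP.
  have HX : pts N = [seq x <- pts N | lab x \in enum 'I_5].
    by apply/esym/all_filterP/allP => x _; rewrite mem_enum.
  rewrite (imm_inv HN Hg Hne HP HX (enum_uniq _)).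
  have E : kmeans_cost (pts N) lab = \sum_(i <- enum 'I_5) cluster_cost [seq x <- pts N | lab x == i].
    rewrite /kmeans_cost /part_cost /clusters big_map. done.
  rewrite -E (kcost_good HN Hg); lra.
- by apply: (@exkmc_exists _ _ _ 5).
- move=> F HF; inversion HF; subst.
    by move: H; rewrite /=.
  move: H0 H1 H2; rewrite /= ltnS leqn0 => /eqP -> H1 H2.
  have Hth := first_step HN Hg Hne (fun th' => H1 0%N th' (ltac:(by []))).
  have Hi : Inv N [:: [seq x <- pts N | x <= th]; [seq x <- pts N | ~~ (x <= th)]].
    split; [|split].
    + change (perm_eq ([seq x <- pts N | x <= th] ++
          ([seq x <- pts N | ~~ (x <= th)] ++ [::])) (pts N)).
      by rewrite cats0 perm_filterC.
    + by [].
    + apply/allP => C; rewrite !inE => /orP[] /eqP ->; rewrite /sep !mem_filter;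
      by apply/negP => /andP[/andP[? _] /andP[? _]]; lra.
  have := final_bound HN (exkmc_inv H2 Hi).
  rewrite /N; nra.
Qed.
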